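(* Let $P_1$ and $P_2$ be finite semipure posets of the same length, and assume $P_2$ has a minimum element $\hat 0_2$. Let $\lambda_1:\mathrm{Cov}(\hat P_1)\to L_1$ be an EL-labeling of $\hat P_1$, whose adjoined minimum and maximum are denoted $\hat 0_1,\hat 1_1$, and let $\lambda_2:\mathrm{Cov}(P_2)\to L_2$ be a semi-EL-labeling of $P_2$. Let $L_2\uplus\{\hat 0_{L_2}\}$ be the poset $L_2$ with a new minimum element $\hat 0_{L_2}$ adjoined, and give $L_1\times(L_2\uplus\{\hat 0_{L_2}\})$ the componentwise (product) order. Denote the minimum of $\widehat{P_1*P_2}$ by $(\hat 0_1,\hat 0_2)$ and its maximum by $\hat 1$. Define $\lambda:\mathrm{Cov}(\widehat{P_1*P_2})\to L_1\times(L_2\uplus\{\hat 0_{L_2}\})$ as follows: for a cover $(x,k)\lessdot(y,l)$ with $(y,l)\neq\hat 1$ (where $(x,k)$ may be the minimum $(\hat 0_1,\hat 0_2)$), $$\lambda((x,k),(y,l))=\begin{cases}(\lambda_1(x,y),\lambda_2(k,l)) & \text{if } k<_{P_2} l,\\ (\lambda_1(x,y),\hat 0_{L_2}) & \text{if } k=l,\end{cases}$$ and for a cover $(x,k)\lessdot\hat 1$, $\lambda((x,k),\hat 1)=(\lambda_1(x,\hat 1_1),\hat 0_{L_2})$. Then $\lambda$ is an EL-labeling of $\widehat{P_1*P_2}$.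
   Context: All posets are finite. A poset $P$ is semipure if for every $x\in P$ all maximal chains of $P_{\le x}=\{y\in P:y\le x\}$ have the same length; this length is the rank $r_P(x)$. For semipure $P,Q$, the Rees product $P*Q$ is the set $\{(p,q)\in P\times Q: r_P(p)\ge r_Q(q)\}$ ordered by $(p_1,q_1)\le(p_2,q_2)$ iff $p_1\le_P p_2$, $q_1\le_Q q_2$ and $r_P(p_2)-r_P(p_1)\ge r_Q(q_2)-r_Q(q_1)$; equivalently $(p_2,q_2)$ covers $(p_1,q_1)$ iff $p_2$ covers $p_1$ in $P$ and either $q_2=q_1$ or $q_2$ covers $q_1$ in $Q$. For any poset $P$, $\hat P$ denotes $P$ with a new minimum $\hat 0$ and a new maximum $\hat 1$ adjoined (even if $P$ already has such elements). $\mathrm{Cov}(P)$ is the set of pairs $(x,y)$ with $y$ covering $x$. For a poset $L$, sequences over $L$ are compared lexicographically: $(a_1,\dots,a_m)\prec(b_1,\dots,b_m)$ if at the first index $i$ with $a_i\ne b_i$ we have $a_i<b_i$. An edge labeling of a bounded poset $P$ is a map $\lambda:\mathrm{Cov}(P)\to L$; the label sequence of a saturated chain $x_1<\dots<x_m$ is $(\lambda(x_1,x_2),\dots,\lambda(x_{m-1},x_m))$, and the chain is weakly increasing if $\lambda(x_i,x_{i+1})\le\lambda(x_{i+1},x_{i+2})$ for all $i$. $\lambda$ is an EL-labeling if for every $x<y$ in $P$ there is a unique weakly increasing maximal chain $C$ of $[x,y]$ and its label sequence lexicographically precedes ($\prec$) the label sequence of every other maximal chain of $[x,y]$. If $P$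 has a minimum $\hat 0$, an edge labeling of $P$ is a semi-EL-labeling if its restriction to $[\hat 0,m]$ is an EL-labeling for every maximal element $m$ of $P$. *)

(* Defs.v *)
From HB Require Import structures.
From mathcomp Require Import all_boot all_order.
Set Implicit Arguments. Unset Strict Implicit. Unset Printing Implicit Defensive.
Import Order.Theory.

Section Generic.
Variables (T : finType) (le : rel T).

Definition ltr (x y : T) : bool := (x != y) && le x y.

Definition covers (x y : T) : bool :=
  ltr x y && [forall z, ~~ (ltr x z && ltr z y)].

Definition is_chain (C : {set T}) : bool :=
  [forall x in C, forall y in C, le x y || le y x].

Definition maxchain_in (A : {set T}) (C : {set T}) : Prop :=
  [/\ is_chain C, C \subset A &
      forall D : {set T}, is_chain D -> C \subset D -> D \subset A -> D = C].

Definition downset (x : T) : {set T} := [set y | le y x].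

Definition semipure : Prop :=
  forall x C D, maxchain_in (downset x) C -> maxchain_in (downset x) D ->
    #|C| = #|D|.

(* rank r(x): length of a (any, by semipurity) maximal chain of P_{<= x};
   we take the maximum cardinality of chains in P_{<= x}, minus one. *)
Definition rank (x : T) : nat :=
  (\max_(C : {set T} | is_chain C && (C \subset downset x)) #|C|).-1.

(* height = length + 1 (max cardinality of a chain; 0 for empty poset) *)
Definition height : nat := \max_(C : {set T} | is_chain C) #|C|.

Definition is_maximal (m : T) : bool := [forall z, ~~ ltr m z].

(* Saturated (= maximal, in a finite poset) chains of [x,y]:
   x :: s with consecutive covers and ending at y. *)
Definition satchain (x y : T) (s : seq T) : bool :=
  path covers x s && (last x s == y).

Variables (Lab : Type) (lle : rel Lab) (lab : T -> T -> Lab).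

Definition labseq (x : T) (s : seq T) : seq Lab := pairmap lab x s.

Fixpoint lexlt (a b : seq Lab) : Prop :=
  match a, b with
  | u :: a', v :: b' => (u = v /\ lexlt a' b') \/ (u <> v /\ lle u v)
  | _, _ => False
  end.

Definition EL_at (x y : T) : Prop :=
  exists s, [/\ satchain x y s, sorted lle (labseq x s),
     (forall s', satchain x y s' -> sorted lle (labseq x s') -> s' = s) &
     (forall s', satchain x y s' -> s' <> s -> lexlt (labseq x s) (labseq x s'))].

Definition EL_labeling : Prop := forall x y, ltr x y -> EL_at x y.

(* semi-EL (P has a minimum z): restriction to [z, m] is an EL-labeling for
   every maximal m; intervals [x,y] of [z,m] are the intervals of P with
   y <= m, and their maximal chains/covers are those of P. *)
Definition semiEL_labeling : Prop :=
  forall m, is_maximal m -> forall x y, ltr x y -> le y m -> EL_at x y.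
End Generic.

(* hat P : None = adjoined minimum, Some None = adjoined maximum,
   Some (Some x) = x. *)
Definition hat (T : finType) : finType := option (option T).
Definition hbot {T : finType} : hat T := None.
Definition htop {T : finType} : hat T := Some None.
Definition hin {T : finType} (x : T) : hat T := Some (Some x).

Definition hat_le (T : finType) (le : rel T) : rel (hat T) :=
  fun a b => match a, b with
  | None, _ => true
  | _, Some None => true
  | Some (Some x), Some (Some y) => le x y
  | _, _ => false
  end.

Definition rees_pred d1 d2 (P1 : finPOrderType d1) (P2 : finPOrderType d2)
  (pq : P1 * P2) : bool :=
  rank (<=%O : rel P2) pq.2 <= rank (<=%O : rel P1) pq.1.

Definition rees d1 d2 (P1 : finPOrderType d1) (P2 : finPOrderType d2) : finType :=
  {pq : P1 * P2 | rees_pred pq}.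

(* (p1,q1) <= (p2,q2) iff p1 <= p2, q1 <= q2 and r(p2)-r(p1) >= r(q2)-r(q1)
   (written without truncated subtraction) *)
Definition rees_le d1 d2 (P1 : finPOrderType d1) (P2 : finPOrderType d2) :
  rel (rees P1 P2) :=
  fun a b =>
    [&& ((val a).1 <= (val b).1)%O, ((val a).2 <= (val b).2)%O &
        rank (<=%O : rel P2) (val b).2 + rank (<=%O : rel P1) (val a).1 <=
        rank (<=%O : rel P1) (val b).1 + rank (<=%O : rel P2) (val a).2].

(* L2 with a new minimum adjoined: None is \hat 0_{L2} *)
Definition opt_le d (L : porderType d) : rel (option L) :=
  fun a b => match a, b with
  | None, _ => true
  | Some _, None => false
  | Some x, Some y => (x <= y)%O
  end.

Definition prod_lab_le d1 d2 (L1 : porderType d1) (L2 : porderType d2) :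
  rel (L1 * option L2) :=
  fun a b => (a.1 <= b.1)%O && opt_le a.2 b.2.

(* coordinates of a non-top element of hat(P1*P2): the minimum is (0_1, 0_2) *)
Definition rees_coord d1 d2 (P1 : finPOrderType d1) (P2 : finPOrderType d2)
  (z2 : P2) (a : hat (rees P1 P2)) : hat P1 * P2 :=
  match a with
  | Some (Some pq) => (hin (val pq).1, (val pq).2)
  | _ => (hbot, z2)
  end.

Definition rees_label d1 d2 e1 e2 (P1 : finPOrderType d1) (P2 : finPOrderType d2)
  (L1 : porderType e1) (L2 : porderType e2) (z2 : P2)
  (lam1 : hat P1 -> hat P1 -> L1) (lam2 : P2 -> P2 -> L2)
  (a b : hat (rees P1 P2)) : L1 * option L2 :=
  let (x, k) := rees_coord z2 a in
  match b with
  | Some None => (lam1 x htop, None)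
  | _ => let (y, l) := rees_coord z2 b in
         (lam1 x y, if (k < l)%O then Some (lam2 k l) else None)
  end.

(* Main.v *)
Require Import Defs.
From HB Require Import structures.
From mathcomp Require Import all_boot all_order.
From mathcomp Require Import zify.
Import Order.Theory.
Set Implicit Arguments. Unset Strict Implicit. Unset Printing Implicit Defensive.

Ltac nat_clean := repeat match goal with
 | H : ?T |- _ => lazymatch T with
    | is_true (leq _ _) => fail
    | @eq nat _ _ => fail
    | _ => clear H end end.
Ltac flia := nat_clean; lia.

Section HatCov.
Variables (X : finType) (le : rel X).
Notation hle := (hat_le le).

Lemma hin_eq (x y : X) : (hin x == hin y :> hat X) = (x == y).
Proof. by []. Qed.

Lemma ltr_hin x y : ltr hle (hin x) (hin y) = ltr le x y.
Proof. by rewrite /ltr hin_eq. Qed.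

Lemma cov_hin_hin x y : covers hle (hin x) (hin y) = covers le x y.
Proof.
rewrite /covers ltr_hin; congr (_ && _); apply/forallP/forallP => H z.
  by have := H (hin z); rewrite !ltr_hin.
by case: z => [[z|]|] //=; rewrite !ltr_hin H.
Qed.

Lemma cov_bot_hin y : covers hle hbot (hin y) = [forall w, ~~ ltr le w y].
Proof.
rewrite /covers /=; apply/forallP/forallP => H z.
  by have := H (hin z); rewrite ltr_hin.
by case: z => [[z|]|] //=; rewrite ltr_hin H.
Qed.

Lemma cov_hin_top x : covers hle (hin x) htop = [forall w, ~~ ltr le x w].
Proof.
rewrite /covers /=; apply/forallP/forallP => H z.
  by have := H (hin z); rewrite ltr_hin andbT.
by case: z => [[z|]|] //=; rewrite ltr_hin /ltr /= !andbT ?H // andbF.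
Qed.

Lemma cov_bot_top : covers hle hbot htop = [forall w : X, false].
Proof.
rewrite /covers /=; apply/forallP/forallP => H z.
  by have := H (hin z).
by case: z => [[z|]|] //=; have := H z.
Qed.

Lemma cov_to_bot u : covers hle u hbot = false.
Proof. by case: u => [[u|]|]; rewrite /covers /ltr. Qed.

Lemma cov_from_top u : covers hle htop u = false.
Proof. by case: u => [[u|]|]; rewrite /covers /ltr. Qed.

End HatCov.
Section Rank.
Variables (d : Order.disp_t) (P : finPOrderType d).
Local Notation le := (<=%O : rel P).
Local Notation rk := (rank le).

Lemma ltrE (x y : P) : ltr le x y = (x < y)%O.
Proof. by rewrite /ltr lt_def eq_sym. Qed.

Lemma coversP (x y : P) : covers le x y <-> (x < y)%O /\ forall z, ~~ ((x < z) && (z < y))%O.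
Proof.
rewrite /covers ltrE; split => [/andP[-> /forallP H]|[-> H]].
  by split => // z; have := H z; rewrite !ltrE.
by apply/forallP => z; rewrite !ltrE.
Qed.

Definition chainP (x : P) := [pred C : {set P} | is_chain le C && (C \subset downset le x)].
Definition mx (x : P) := \max_(C in chainP x) #|C|.

Lemma rankE x : rk x = (mx x).-1.
Proof. by []. Qed.

Lemma chain_sub (C D : {set P}) : is_chain le D -> C \subset D -> is_chain le C.
Proof.
move=> /forallP HD /subsetP CD; apply/forallP => a; apply/implyP => aC.
apply/forallP => b; apply/implyP => bC.
by have := HD a; move/implyP/(_ (CD _ aC))/forallP/(_ b)/implyP/(_ (CD _ bC)).
Qed.


Lemma set1_chainP (x : P) : [set x] \in chainP x.
Proof.
rewrite inE; apply/andP; split.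
  by apply/forallP => a; apply/implyP; rewrite inE => /eqP->; apply/forallP => b;
     apply/implyP; rewrite inE => /eqP->; rewrite lexx.
by apply/subsetP => a; rewrite !inE => /eqP->.
Qed.

Lemma mx_max x : {C | C \in chainP x & mx x = #|C| }.
Proof.
have : 0 < #|chainP x| by apply/card_gt0P; exists [set x]; apply: set1_chainP.
by move/(eq_bigmax_cond (fun C : {set P} => #|C|)) => [C HC E]; exists C.
Qed.

Lemma mx_ge C x : C \in chainP x -> #|C| <= mx x.
Proof. by move=> H; apply: (leq_bigmax_cond (P := mem (chainP x))). Qed.

Lemma mx_gt0 x : 0 < mx x.
Proof. by have := mx_ge (set1_chainP x); rewrite cards1. Qed.

Lemma in_chainP C x : (C \in chainP x) = is_chain le C && (C \subset downset le x).
Proof. by rewrite inE. Qed.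

Lemma chainU1 (C : {set P}) y : is_chain le C -> (forall c, c \in C -> (c <= y)%O) ->
  is_chain le (y |: C).
Proof.
move=> /forallP HC Hy; apply/forallP => a; apply/implyP; rewrite in_setU1 => /orP[/eqP->|aC];
  apply/forallP => b; apply/implyP; rewrite in_setU1 => /orP[/eqP->|bC].
- by rewrite lexx.
- by rewrite Hy ?orbT.
- by rewrite Hy.
by have := HC a; move/implyP/(_ aC)/forallP/(_ b)/implyP/(_ bC).
Qed.

Lemma mx_lt (x y : P) : (x < y)%O -> mx x < mx y.
Proof.
move=> xy; have [C HC E] := mx_max x; rewrite E.
move: HC; rewrite in_chainP => /andP[ch sub].
have Cx : forall c, c \in C -> (c <= x)%O by move=> c /(subsetP sub); rewrite inE.
have yC : y \notin C by apply/negP => /Cx yx; have := lt_le_trans xy yx; rewrite ltxx.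
have: y |: C \in chainP y.
  rewrite in_chainP chainU1 //=; last by move=> c /Cx /le_lt_trans/(_ xy)/ltW.
  apply/subsetP => c; rewrite !inE => /orP[/eqP->|/Cx cx]; first by rewrite lexx.
  exact: (le_trans cx (ltW xy)).
by move/mx_ge; rewrite cardsU1 yC.
Qed.

Lemma rank_lt (x y : P) : (x < y)%O -> rk x < rk y.
Proof. by move=> /mx_lt; rewrite !rankE; have := mx_gt0 x; lia. Qed.

Lemma rank_le (x y : P) : (x <= y)%O -> rk x <= rk y.
Proof. by rewrite le_eqVlt => /orP[/eqP->//|/rank_lt/ltnW]. Qed.

Lemma rank_min (x : P) : (forall w, ~~ (w < x)%O) -> rk x = 0.
Proof.
move=> H; rewrite rankE.
suff : mx x <= 1 by lia.
apply/bigmax_leqP => C; rewrite in_chainP => /andP[_ /subsetP sub].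
rewrite -(cards1 x); apply: subset_leq_card; apply/subsetP => c /sub.
rewrite !inE le_eqVlt => /orP[//|cx]; by have := H c; rewrite cx.
Qed.

Lemma le_rank_eq (x y : P) : (x <= y)%O -> rk y <= rk x -> x = y.
Proof.
rewrite le_eqVlt => /orP[/eqP->//|/rank_lt]; lia.
Qed.

Lemma rank_le_card (x : P) : rk x <= #|P|.
Proof. rewrite rankE; have [C _ ->] := mx_max x; exact: leq_trans (leq_pred _) (max_card _). Qed.

Lemma not_cover (x y : P) : (x < y)%O -> ~~ covers le x y ->
  exists w, (x < w)%O /\ (w < y)%O.
Proof.
move=> xy; rewrite /covers ltrE xy /= => /forallPn [w]; rewrite negbK !ltrE => /andP[a b].
by exists w.
Qed.

Lemma cover_above (x y : P) : (x < y)%O -> exists z, covers le x z /\ (z <= y)%O.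
Proof.
move: {2}(rk y - rk x) (leqnn (rk y - rk x)) => n; elim: n y => [|n IH] y Hn xy.
  by have := rank_lt xy; lia.
case C: (covers le x y); first by exists y.
have [w [xw wy]] := not_cover xy (negbT C).
have [|z [cz zw]] := IH w _ xw; first by have := rank_lt wy; lia.
by exists z; split => //; apply: le_trans zw (ltW wy).
Qed.

Lemma cover_below (x y : P) : (x < y)%O -> exists z, covers le z y /\ (x <= z)%O.
Proof.
move: {2}(rk y - rk x) (leqnn (rk y - rk x)) => n; elim: n x => [|n IH] x Hn xy.
  by have := rank_lt xy; lia.
case C: (covers le x y); first by exists x.
have [w [xw wy]] := not_cover xy (negbT C).
have [|z [cz zw]] := IH w _ wy; first by have := rank_lt xw; lia.
by exists z; split => //; apply: le_trans (ltW xw) zw.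
Qed.

Lemma max_above (l : P) : exists m, is_maximal le m /\ (l <= m)%O.
Proof.
move: {2}(#|P| - rk l) (leqnn (#|P| - rk l)) => n; elim: n l => [|n IH] l Hn.
  exists l; split => //; apply/forallP => z; apply/negP; rewrite ltrE => /rank_lt.
  by have := rank_le_card z; lia.
case M: (is_maximal le l); first by exists l.
move/negbT: M => /forallPn [w]; rewrite negbK ltrE => lw.
have [|m [Hm wm]] := IH w; first by have := rank_lt lw; have := rank_le_card w; lia.
by exists m; split => //; apply: le_trans (ltW lw) wm.
Qed.

Hypothesis sp : semipure le.

Lemma maxchain_of_max x C : C \in chainP x -> mx x = #|C| -> maxchain_in le (downset le x) C.
Proof.
rewrite in_chainP => /andP[ch sub] E; split => // D chD CD Dsub.
apply/eqP; rewrite eq_sym eqEcard CD /= -E; apply: mx_ge.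
by rewrite in_chainP chD.
Qed.

Lemma rank_cover (x y : P) : covers le x y -> rk y = (rk x).+1.
Proof.
move=> /coversP[xy nb].
have [C HC E] := mx_max x.
have [Cy HCy Ey] := mx_max y.
have mC := maxchain_of_max HC E.
have mCy := maxchain_of_max HCy Ey.
move: (HC); rewrite in_chainP => /andP[ch sub].
have Cx : forall c, c \in C -> (c <= x)%O by move=> c /(subsetP sub); rewrite inE.
have yC : y \notin C by apply/negP => /Cx yx; have := lt_le_trans xy yx; rewrite ltxx.
have xC : x \in C.
  apply/negPn/negP => xC.
  have : x |: C \in chainP x.
    rewrite in_chainP chainU1 //= subUset sub andbT sub1set inE lexx //.
  by move/mx_ge; rewrite cardsU1 xC E; lia.
have mC' : maxchain_in le (downset le y) (y |: C).
  split.
  - by apply: chainU1 => // c /Cx /le_lt_trans/(_ xy)/ltW.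
  - apply/subsetP => c; rewrite !inE => /orP[/eqP->|/Cx cx]; first by rewrite lexx.
    exact: (le_trans cx (ltW xy)).
  move=> D chD CD Dsub; apply/eqP; rewrite eqEsubset CD andbT.
  have CD' : C \subset D :&: downset le x.
    by rewrite subsetI sub andbT; apply: subset_trans CD; apply: subsetUr.
  have Heq : D :&: downset le x = C.
    case: mC => _ _ /(_ (D :&: downset le x)); apply => //.
      by apply: chain_sub chD _; apply: subsetIl.
    exact: subsetIr.
  apply/subsetP => c cD; rewrite in_setU1.
  have cy : (c <= y)%O by have := subsetP Dsub c cD; rewrite inE.
  have [->|cny] := eqVneq c y; first by rewrite ?eqxx.
  rewrite /=.
  have xD : x \in D by apply: (subsetP CD); rewrite inE xC orbT.
  have := (forallP chD) c; move/implyP/(_ cD)/forallP/(_ x)/implyP/(_ xD) => /orP[cx|xc].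
    by rewrite -Heq !inE cD /=.
  have : c == x.
    apply/negPn/negP => cnx; have := nb c.
    by rewrite !lt_def cnx xc cy /= eq_sym cny.
  by move/eqP->.
have := sp mC' mCy; rewrite cardsU1 yC -Ey -E rankE rankE.
have := mx_gt0 x; lia.
Qed.

Lemma rank_path (x : P) s : path (covers le) x s -> rk (last x s) = rk x + size s.
Proof.
elim: s x => [|y s IH] x /=; first by rewrite addn0.
by move=> /andP[/rank_cover E /IH ->]; rewrite E addnS addSn.
Qed.

End Rank.
Lemma pairmap_map (A B C : Type) (h : A -> B) (F : B -> B -> C) x s :
  pairmap F (h x) (map h s) = pairmap (fun u v => F (h u) (h v)) x s.
Proof. by elim: s x => [|y s IH] x //=; rewrite IH. Qed.

Section LabSeq.
Variables (e1 e2 : Order.disp_t) (L1 : porderType e1) (L2 : porderType e2).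
Local Notation ple := (@prod_lab_le _ _ L1 L2).
Local Notation ole := (@opt_le _ L2).

Lemma path_zip (a : seq L1) (b : seq (option L2)) x y : size a = size b ->
  path ple (x, y) (zip a b) = path <=%O x a && path ole y b.
Proof.
elim: a b x y => [|x' a IH] [|y' b] x y //= [E].
by rewrite IH // /prod_lab_le /= -!andbA; congr (_ && _); rewrite andbCA.
Qed.

Lemma sorted_zip (a : seq L1) (b : seq (option L2)) : size a = size b ->
  sorted ple (zip a b) = sorted <=%O a && sorted ole b.
Proof. by case: a b => [|x a] [|y b] //= [E]; rewrite path_zip. Qed.

Lemma path_someP (x : L2) (b : seq (option L2)) : path ole (Some x) b ->
  exists g, b = map Some g.
Proof.
elim: b x => [|[y|] b IH] x /=; first by exists [::].
  by move=> /andP[_ /IH[g ->]]; exists (y :: g).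
by rewrite /opt_le.
Qed.

Lemma sorted_optP (b : seq (option L2)) : sorted ole b ->
  exists j g, b = nseq j None ++ map Some g.
Proof.
elim: b => [|[y|] b IH] /=; first by exists 0, [::].
  by move=> /path_someP[g ->]; exists 0, (y :: g).
move=> /path_sorted/IH[j [g ->]]; by exists j.+1, g.
Qed.

Lemma sorted_map_some (g : seq L2) : sorted ole (map Some g) = sorted <=%O g.
Proof. by rewrite sorted_map. Qed.

Lemma sorted_nseq_some j (g : seq L2) : sorted <=%O g -> sorted ole (nseq j None ++ map Some g).
Proof.
move=> sg; elim: j => [|j IH] /=; first by rewrite sorted_map_some.
by move: IH; case: (nseq j None ++ _).
Qed.

Lemma pmap_nsome j (g : seq L2) : pmap id (nseq j None ++ map Some g) = g.
Proof. by elim: j => [|j IH] //=; elim: g => //= y g ->. Qed.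

Lemma count_nsome j (g : seq L2) : count isSome (nseq j None ++ map Some g) = size g.
Proof. by elim: j => [|j IH] //=; elim: g => //= y g ->. Qed.

Lemma lex_zip (a a' : seq L1) (b b' : seq (option L2)) :
  size a = size b -> size a' = size b' ->
  (a = a' \/ lexlt <=%O a a') ->
  sorted ole b ->
  (count isSome b = 0 \/ [/\ size b = size b', count isSome b = count isSome b' &
       (pmap id b = pmap id b' \/ lexlt <=%O (pmap id b) (pmap id b'))]) ->
  zip a b = zip a' b' \/ lexlt ple (zip a b) (zip a' b').
Proof.
elim: a a' b b' => [|x a IH] a' b b'.
  move=> Sb Sa' Ha; have -> : b = [::] by case: b Sb.
  case: Ha => [Ea|//]; subst a'; by case: b' Sa' => //; left.
case: b => // y b /succn_inj Sa Sa' Ha Sb Hb.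
case: a' Sa' Ha => [|x' a1] Sa' Ha; first by case: Ha.
case: b' Sa' Hb => // y' b' /succn_inj Sa1 Hb.
have Hx : (x <= x')%O /\ (x = x' -> a = a1 \/ lexlt <=%O a a1).
  case: Ha => [[<- <-]|/= [[<- H]|[Hne H]]].
  - by split => //; left.
  - by split => //; right.
  - by split => // E.
have Sb1 : sorted ole b by apply: path_sorted Sb.
have Hy : ole y y' /\ (y = y' -> count isSome b = 0 \/ [/\ size b = size b', count isSome b = count isSome b' &
       (pmap id b = pmap id b' \/ lexlt <=%O (pmap id b) (pmap id b'))]).
  case: Hb => [|[Sbb Cb Pb]].
    by case: y {Sb} => //= C; split => // _; left.
  case: y Sb Sbb Cb Pb => [v|] Sb Sbb Cb Pb.
    have [g Eb] := path_someP Sb.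
    have Cb' : count isSome (y' :: b') = size (y' :: b').
      by rewrite -Cb -Sbb Eb /= count_map size_map (eq_count (a2 := predT)) ?count_predT.
    case: y' Sbb Cb Cb' Pb => [v'|] Sbb Cb Cb' Pb; last first.
      by move: Cb' => /= ; have := count_size isSome b'; lia.
    move: Pb => /= [[-> E]|[[-> E]|[Hne H0]]]; split => //; try by rewrite lexx.
    + move=> _; right; split; [move: Sbb => /=; lia|move: Cb => /=; lia|by left].
    + move=> _; right; split; [move: Sbb => /=; lia|move: Cb => /=; lia|by right].
    + by move=> [E].
  case: y' Sbb Cb Pb => [v'|] Sbb Cb Pb /=.
    by split => // [[]].
  by split => // _; right; split => //; move: Sbb Cb => /=; lia.
case: Hx => Hx1 Hx2; case: Hy => Hy1 Hy2.
have [E|Hne] := eqVneq (x, y) (x', y').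
  case: E => Ex Ey; subst x' y'.
  have [E|L] := IH a1 b b' Sa Sa1 (Hx2 erefl) Sb1 (Hy2 erefl).
    by left; rewrite /= E.
  by right; left.
right; right; split; first by apply/eqP.
by rewrite /prod_lab_le /= Hx1.
Qed.
End LabSeq.

Section Rees.
Variables (d1 d2 : Order.disp_t) (P1 : finPOrderType d1) (P2 : finPOrderType d2).
Local Notation le1 := (<=%O : rel P1).
Local Notation le2 := (<=%O : rel P2).
Local Notation r1 := (rank le1).
Local Notation r2 := (rank le2).
Hypotheses (sp1 : semipure le1) (sp2 : semipure le2).
Variable z2 : P2.
Hypothesis z2min : forall q, (z2 <= q)%O.
Local Notation R := (rees P1 P2).
Local Notation rle := (@rees_le _ _ P1 P2).

Lemma rank_z2 : r2 z2 = 0.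
Proof. apply: rank_min => w; apply/negP => wz; have := le_lt_trans (z2min w) wz; by rewrite ltxx. Qed.

Lemma reesP (u : R) : r2 (val u).2 <= r1 (val u).1.
Proof. exact: (valP u). Qed.

Definition mkR (p : P1) (q : P2) (H : r2 q <= r1 p) : R := exist _ (p, q) H.

Lemma rees_eq (u v : R) : (val u).1 = (val v).1 -> (val u).2 = (val v).2 -> u = v.
Proof. by move=> E1 E2; apply: val_inj; rewrite [val u]surjective_pairing [val v]surjective_pairing E1 E2. Qed.

Lemma rleE (u v : R) : rle u v = [&& ((val u).1 <= (val v).1)%O, ((val u).2 <= (val v).2)%O &
        r2 (val v).2 + r1 (val u).1 <= r1 (val v).1 + r2 (val u).2].
Proof. by []. Qed.

Lemma rle_fst_eq (u v : R) : rle u v -> (val u).1 = (val v).1 -> u = v.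
Proof.
rewrite rleE => /and3P[_ le2 rk] E; apply: rees_eq => //.
by apply: le_rank_eq le2 _; rewrite E in rk; flia.
Qed.

Lemma rltr_fst (u v : R) : ltr rle u v -> ((val u).1 < (val v).1)%O.
Proof.
move=> /andP[neq le]; rewrite lt_def; move: (le); rewrite rleE => /and3P[-> _ _].
rewrite andbT eq_sym; apply/eqP => E; move/eqP: neq; apply; exact: rle_fst_eq.
Qed.

Lemma cover_between (u v w : R) : covers rle u v -> u != w -> rle u w -> rle w v -> w = v.
Proof.
move=> /andP[_ /forallP nb] uw l1 l2; have := nb w.
by rewrite /ltr uw l1 l2 /= andbT negbK => /eqP.
Qed.

Lemma rees_cover (u v : R) : covers rle u v <->
  covers le1 (val u).1 (val v).1 /\ ((val u).2 = (val v).2 \/ covers le2 (val u).2 (val v).2).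
Proof.
move: (reesP u) (reesP v).
case: u => [[p1 q1] /= Hu]; case: v => [[p2 q2] /= Hv] Ru Rv.
set u := exist _ (p1, q1) Hu; set v := exist _ (p2, q2) Hv.
split.
- move=> cuv; move: (cuv) => /andP[lt _].
  have p12 : (p1 < p2)%O := rltr_fst lt.
  move: (lt) => /andP[_]; rewrite rleE /= => /and3P[_ q12 rk].
  have [p' [cp' p'2]] := cover_above p12.
  have rp' := rank_cover sp1 cp'.
  have p1p' : (p1 < p')%O by case/coversP: cp'.
  have rp'2 := rank_le p'2.
  have [Eq|nq] := eqVneq q1 q2.
    subst q2.
    have Hw : r2 q1 <= r1 p' by flia.
    have Hne : u != mkR Hw by apply/eqP => [[E]]; move: p1p'; rewrite E ltxx.
    have := cover_between cuv Hne.
    rewrite !rleE /= lexx (ltW p1p') p'2 /=.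
    move=> Hb; have : mkR Hw = v by apply: Hb; flia.
    move/(congr1 val) => /= [E]; subst p'.
    by split => //; left.
  have q1q2 : (q1 < q2)%O by rewrite lt_neqAle nq.
  have [q' [cq' q'2]] := cover_above q1q2.
  have rq' := rank_cover sp2 cq'.
  have q1q' : (q1 <= q')%O by case/coversP: cq' => /ltW.
  have Hw : r2 q' <= r1 p' by flia.
  have Hne : u != mkR Hw by apply/eqP => [[E]]; move: p1p'; rewrite E ltxx.
  have := cover_between cuv Hne.
  rewrite !rleE /= (ltW p1p') p'2 q1q' q'2 /=.
  move=> Hb; have : mkR Hw = v by apply: Hb; flia.
  move/(congr1 val) => /= [E1 E2]; subst p' q'.
  by split => //; right.
- move=> [cp Hq].
  have [p12 nbp] := (coversP _ _).1 cp.
  have rp := rank_cover sp1 cp.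
  have q12 : (q1 <= q2)%O by case: Hq => [->|/coversP[/ltW]].
  have [rq1 rq2] : r2 q2 <= (r2 q1).+1 /\ r2 q1 <= r2 q2.
    by case: Hq => [->|/(rank_cover sp2)->]; flia.
  apply/andP; split.
    apply/andP; split.
      by apply/eqP => [[E _]]; move: p12; rewrite E ltxx.
    by rewrite rleE /= (ltW p12) q12 /=; flia.
  apply/forallP => z; apply/negP => /andP[/andP[uz lz] /andP[zv zl]].
  move: lz zl; rewrite !rleE /= => /and3P[pz qz rz] /and3P[zp zq zr].
  have [E1|n1] := eqVneq p1 (val z).1.
    rewrite -E1 in rz.
    have Eq : q1 = (val z).2 by apply: le_rank_eq qz _; flia.
    by move/eqP: uz; apply; apply: rees_eq.
  have [E2|n2] := eqVneq (val z).1 p2.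
    rewrite E2 in zr.
    have Eq : (val z).2 = q2 by apply: le_rank_eq zq _; flia.
    by move/eqP: zv; apply; apply: rees_eq.
  have := nbp (val z).1; rewrite !lt_def pz zp !andbT.
  by rewrite eq_sym n1 eq_sym n2.
Qed.

Lemma rees_max (u : R) : [forall w, ~~ ltr rle u w] = [forall p, ~~ ltr le1 (val u).1 p].
Proof.
case: u => [[p0 q0] Hu]; set u := exist _ (p0, q0) Hu; rewrite /=.
have Ru : r2 q0 <= r1 p0 := Hu.
apply/forallP/forallP => H p.
  apply/negP; rewrite ltrE => up.
  have rup := rank_lt up.
  have Hw : r2 q0 <= r1 p by flia.
  have := H (mkR Hw); rewrite /ltr rleE /= (ltW up) lexx /=.
  have -> : u != mkR Hw by apply/eqP => /(congr1 val) [E]; move: up; rewrite E ltxx.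
  by move=> /negP; apply => /=; flia.
apply/negP => /rltr_fst up; by have := H (val p).1; rewrite ltrE up.
Qed.

Lemma rees_min (u : R) : [forall w, ~~ ltr rle w u] =
   [forall p, ~~ ltr le1 p (val u).1] && ((val u).2 == z2).
Proof.
case: u => [[p0 q0] Hu]; set u := exist _ (p0, q0) Hu; rewrite /=.
have Ru : r2 q0 <= r1 p0 := Hu.
apply/forallP/andP => [H|[/forallP H /eqP E2] w].
  have Hm : [forall p, ~~ ltr le1 p p0].
    apply/forallP => p; apply/negP; rewrite ltrE => pu.
    have [p' [cp' pp']] := cover_below pu.
    have rp' := rank_cover sp1 cp'.
    have rpu := rank_lt pu.
    have [E|nq] := eqVneq q0 z2.
      have Hw : r2 z2 <= r1 p by rewrite rank_z2.
      have := H (mkR Hw); rewrite /ltr rleE /= (ltW pu) E lexx rank_z2 /=.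
      have -> : mkR Hw != u by apply/eqP => /(congr1 val) [E']; move: pu; rewrite E' ltxx.
      by move=> /negP; apply => /=; flia.
    have zq : (z2 < q0)%O by rewrite lt_def nq z2min.
    have [q' [cq' _]] := cover_below zq.
    have rq' := rank_cover sp2 cq'.
    have Hw : r2 q' <= r1 p' by flia.
    have := H (mkR Hw); rewrite /ltr rleE /=.
    have -> : mkR Hw != u by apply/eqP => /(congr1 val) [E' _]; move: cp'; rewrite E' /covers /ltr eqxx.
    rewrite (ltW (proj1 ((coversP _ _).1 cp'))) (ltW (proj1 ((coversP _ _).1 cq'))) /=.
    by move=> /negP; apply => /=; flia.
  split => //; apply/eqP.
  have r0 : r1 p0 = 0.
    by apply: rank_min => w; have := (forallP Hm) w; rewrite ltrE.
  by apply/esym/le_rank_eq => //; rewrite rank_z2; flia.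
apply/negP => /andP[wu lwu].
have [E|ne] := eqVneq (val w).1 p0.
  move/eqP: wu; apply; exact: rle_fst_eq.
have := H (val w).1; rewrite /ltr ne; move: lwu; rewrite rleE => /and3P[-> _ _].
done.
Qed.

End Rees.

Section Main.
Variables (d1 d2 e1 e2 : Order.disp_t)
  (P1 : finPOrderType d1) (P2 : finPOrderType d2)
  (L1 : porderType e1) (L2 : porderType e2)
  (z2 : P2) (lam1 : hat P1 -> hat P1 -> L1) (lam2 : P2 -> P2 -> L2).
Local Notation le1 := (<=%O : rel P1).
Local Notation le2 := (<=%O : rel P2).
Local Notation r1 := (rank le1).
Local Notation r2 := (rank le2).
Hypotheses (sp1 : semipure le1) (sp2 : semipure le2).
Hypothesis z2min : forall q, (z2 <= q)%O.
Variable p0 : P1.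
Local Notation R := (rees P1 P2).
Local Notation rle := (@rees_le _ _ P1 P2).
Local Notation H1 := (hat P1).
Local Notation hle1 := (hat_le le1).
Local Notation Q := (hat R).
Local Notation qle := (hat_le rle).
Local Notation lab := (rees_label z2 lam1 lam2).
Local Notation covQ := (covers qle).
Local Notation cov1 := (covers hle1).
Local Notation cov2 := (covers le2).

Definition f (u : Q) : H1 :=
  match u with Some (Some w) => hin (val w).1 | Some None => htop | None => hbot end.
Definition g (u : Q) : P2 :=
  match u with Some (Some w) => (val w).2 | _ => z2 end.
Definition mk (x : H1) (q : P2) : Q :=
  match x with
  | Some (Some p) => if @insub _ _ R (p, q) is Some w then hin w else hbot
  | Some None => htop
  | None => hbot end.
Definition sec (u v : Q) : option L2 :=
  if (g u < g v)%O then Some (lam2 (g u) (g v)) else None.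

Lemma mkK u : mk (f u) (g u) = u.
Proof. by case: u => [[w|]|] //=; rewrite -surjective_pairing valK. Qed.

Lemma mk_hin p q (H : r2 q <= r1 p) : mk (hin p) q = hin (mkR H).
Proof. by rewrite /= insubT. Qed.

Lemma ltz2 q : (q < z2)%O = false.
Proof. exact: (le_gtF (z2min q)). Qed.

Lemma sec_top u : sec u htop = None.
Proof. by rewrite /sec /= ltz2. Qed.

Lemma f_top u : (f u == htop) = (u == htop).
Proof. by case: u => [[w|]|]. Qed.

Lemma labE u v : u != htop -> lab u v = (lam1 (f u) (f v), sec u v).
Proof.
by case: u => [[w|]|] // _; case: v => [[w'|]|] //=; rewrite /sec /= ?ltz2 ?ltxx.
Qed.

Lemma Rne : [forall w : R, false] = false.
Proof.
have H : r2 z2 <= r1 p0 by rewrite (rank_z2 z2min).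
by apply/negP => /forallP/(_ (mkR H)).
Qed.

Lemma P1ne : [forall w : P1, false] = false.
Proof. by apply/negP => /forallP/(_ p0). Qed.

Lemma covQ_fwd u v : covQ u v ->
  cov1 (f u) (f v) /\ (v != htop -> g u = g v \/ cov2 (g u) (g v)).
Proof.
case: u => [[w|]|]; case: v => [[w'|]|];
  rewrite ?cov_hin_hin ?cov_bot_hin ?cov_hin_top ?cov_bot_top ?cov_to_bot ?cov_from_top ?Rne //=.
- by move/(rees_cover sp1 sp2) => [? ?]; split.
- by rewrite rees_max.
- by rewrite (rees_min sp1 sp2 z2min) // => /andP[-> /eqP->]; split => // _; left.
Qed.

Lemma covQ_bwd u v : cov1 (f u) (f v) ->
  (v != htop -> g u = g v \/ cov2 (g u) (g v)) -> covQ u v.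
Proof.
case: u => [[w|]|]; case: v => [[w'|]|];
  rewrite ?cov_hin_hin ?cov_bot_hin ?cov_hin_top ?cov_bot_top ?cov_to_bot ?cov_from_top ?P1ne //=.
- by move=> c1 /(_ isT) c2; apply/(rees_cover sp1 sp2).
- by rewrite rees_max.
- rewrite (rees_min sp1 sp2 z2min) // => H /(_ isT) [E|c]; first by rewrite H -E eqxx.
  have := rank_cover sp2 c; rewrite (rank_z2 z2min).
  have : r1 (val w').1 = 0 by apply: rank_min => x; have := (forallP H) x; rewrite ltrE.
  by have := reesP w'; rewrite /=; flia.
Qed.


Definition rh (x : H1) : nat := if x is Some (Some p) then (r1 p).+1 else 0.

Lemma rh_cover x y : cov1 x y -> y != htop -> rh y = (rh x).+1.
Proof.
case: x => [[p|]|]; case: y => [[q|]|] //=;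
  rewrite ?cov_hin_hin ?cov_bot_hin ?cov_to_bot ?cov_from_top //.
- by move=> /(rank_cover sp1) ->.
- move=> H _; congr S; apply: rank_min => w; have := (forallP H) w; by rewrite ltrE.
Qed.

Lemma path_top_nil (T : finType) (le : rel T) (s : seq (hat T)) :
  path (covers (hat_le le)) htop s -> s = [::].
Proof. by case: s => //= x s; rewrite cov_from_top. Qed.

Lemma path_notop (T : finType) (le : rel T) (x : hat T) s :
  path (covers (hat_le le)) x s -> last x s != htop -> htop \notin x :: s.
Proof.
elim: s x => [|y s IH] x /=; first by move=> _ H; rewrite inE eq_sym.
move=> /andP[c p] l; rewrite inE negb_or IH // andbT.
by apply/eqP => E; move: c; rewrite -E cov_from_top.
Qed.

Lemma path_nobot (T : finType) (le : rel T) (x : hat T) s :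
  path (covers (hat_le le)) x s -> hbot \notin s.
Proof.
elim: s x => [|y s IH] x //= /andP[c p]; rewrite inE negb_or (IH y) // andbT.
by apply/eqP => E; move: c; rewrite -E cov_to_bot.
Qed.

Lemma rh_path x s : path cov1 x s -> last x s != htop -> rh (last x s) = rh x + size s.
Proof.
elim: s x => [|y s IH] x /=; first by rewrite addn0.
move=> /andP[c p] l; rewrite IH //.
have yt : y != htop by apply/eqP => E; move: p l; rewrite E => /path_top_nil->.
by rewrite (rh_cover c yt) addSnnS.
Qed.

Lemma fpath a s : path covQ a s -> path cov1 (f a) (map f s).
Proof.
elim: s a => [|v s IH] a //= /andP[/covQ_fwd[c _] p]; by rewrite c IH.
Qed.

Lemma labseqE a s : path covQ a s ->
  labseq lab a s = zip (labseq lam1 (f a) (map f s)) (pairmap sec a s).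
Proof.
elim: s a => [|v s IH] a //= /andP[c p].
have at' : a != htop by apply/eqP => E; move: c; rewrite E cov_from_top.
by rewrite /labseq /= labE // -/(labseq _ _ _) IH //.
Qed.

Fixpoint comp (a : Q) (s : seq Q) : seq P2 :=
  if s is v :: s' then (if (g a < g v)%O then g v :: comp v s' else comp v s') else [::].

Fixpoint recon (k : P2) (bs : seq bool) (c : seq P2) : seq P2 :=
  match bs with
  | [::] => [::]
  | b :: bs' => if b then (if c is c0 :: c' then c0 :: recon c0 bs' c' else [::])
                else k :: recon k bs' c
  end.

Lemma comp_count a s : count isSome (pairmap sec a s) = size (comp a s).
Proof.
elim: s a => [|v s IH] a //=; rewrite [sec a v]/sec; case: ifP => _ /=; by rewrite IH.
Qed.

Lemma step_g u v : covQ u v -> v != htop ->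
  if (g u < g v)%O then cov2 (g u) (g v) else g u == g v.
Proof.
move=> /covQ_fwd[_ H] /H [E|c]; first by rewrite E ltxx eqxx.
by have [lt _] := (coversP _ _).1 c; rewrite lt.
Qed.

Lemma comp_path a s : path covQ a s -> last a s != htop ->
  path cov2 (g a) (comp a s) && (last (g a) (comp a s) == g (last a s)).
Proof.
elim: s a => [|v s IH] a /=; first by rewrite eqxx.
move=> /andP[c p] l.
have vt : v != htop by apply/eqP => E; move: p l; rewrite E => /path_top_nil->.
have := step_g c vt; case: ifP => _ /=.
  by move=> ->; apply: IH.
by move=> /eqP->; apply: IH.
Qed.

Lemma comp_lab a s : path covQ a s -> pmap id (pairmap sec a s) = labseq lam2 (g a) (comp a s).
Proof.
elim: s a => [|v s IH] a //= /andP[c p].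
have [E|vt] := eqVneq v htop.
  by subst v; move: p => /path_top_nil->; rewrite sec_top /= ltz2.
have := step_g c vt; rewrite [sec a v]/sec; case: ifP => _ /=.
  by move=> _; rewrite IH.
by move=> /eqP->; rewrite IH.
Qed.

Lemma s_recon a s : path covQ a s ->
  s = map (fun p => mk p.1 p.2) (zip (map f s) (recon (g a) (map isSome (pairmap sec a s)) (comp a s))).
Proof.
elim: s a => [|v s IH] a //= /andP[c p].
have [E|vt] := eqVneq v htop.
  by subst v; move: p => /path_top_nil->; rewrite sec_top.
have := step_g c vt; rewrite [sec a v]/sec; case: ifP => _ /=.
  by move=> _; rewrite mkK -IH.
by move=> /eqP E; rewrite E mkK -IH.
Qed.

Lemma uniq_from a s s' : path covQ a s -> path covQ a s' ->
  map f s = map f s' -> pairmap sec a s = pairmap sec a s' -> comp a s = comp a s' -> s = s'.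
Proof.
by move=> p p' E1 E2 E3; rewrite (s_recon p) (s_recon p') E1 E2 E3.
Qed.


Lemma build_none (c : seq H1) (u : Q) : u != htop -> path cov1 (f u) c ->
  exists s, [/\ path covQ u s, map f s = c, pairmap sec u s = nseq (size c) None &
      (last u s != htop -> g (last u s) = g u)].
Proof.
elim: c u => [|x c IH] u ut /=; first by move=> _; exists [::].
move=> /andP[cx pc].
case: x cx pc => [[p|]|] cx pc; last by move: cx; case: (f u) => [[?|]|].
- have Hw : r2 (g u) <= r1 p.
    case: u ut cx => [[w|]|] //= _.
      by rewrite cov_hin_hin => /(rank_cover sp1) ->; have := reesP w; rewrite /=; flia.
    by rewrite (rank_z2 z2min).
  have [s [ps fs ss ls]] := IH (hin (mkR Hw)) isT pc.
  exists (hin (mkR Hw) :: s); split => /=.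
  + rewrite ps andbT; apply: covQ_bwd => //= _; by left.
  + by rewrite fs.
  + by rewrite ss /sec /= ltxx.
  + by move=> /ls ->.
- move: pc => /path_top_nil ->.
  exists [:: htop]; split => //=.
  + by rewrite andbT; apply: covQ_bwd.
  + by rewrite sec_top.
Qed.

Lemma build_some (c : seq H1) (d : seq P2) (w : R) :
  path cov1 (hin (val w).1) c -> path cov2 (val w).2 d -> size c = size d -> htop \notin c ->
  exists s, [/\ path covQ (hin w) s, map f s = c, map g s = d &
     pairmap sec (hin w) s = map Some (labseq lam2 (val w).2 d)].
Proof.
elim: c d w => [|x c IH] d w.
  by case: d => // _ _ _ _; exists [::].
case: d => [//|q d] /=.
move=> /andP[cx pc] /andP[cq pd] /succn_inj Sz; rewrite inE negb_or => /andP[xt nt].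
case: x cx pc xt => [[p|]|] cx pc xt //.
have Hw : r2 q <= r1 p.
  move: cx; rewrite cov_hin_hin => /(rank_cover sp1) ->.
  rewrite (rank_cover sp2 cq); have := reesP w; rewrite /=; flia.
have [s [ps fs gs ss]] := IH d (mkR Hw) pc pd Sz nt.
exists (hin (mkR Hw) :: s); split => /=.
- rewrite ps andbT; apply: covQ_bwd => //= _; by right.
- by rewrite fs.
- by rewrite gs.
- by rewrite ss /sec /= (proj1 ((coversP _ _).1 cq)).
Qed.

Lemma ltrQ_f a b : ltr qle a b -> ltr hle1 (f a) (f b).
Proof.
case: a => [[w|]|]; case: b => [[w'|]|] //=; rewrite ?ltr_hin //.
by move/rltr_fst; rewrite ltrE.
Qed.

Lemma leQ_g a b : qle a b -> b != htop -> (g a <= g b)%O.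
Proof.
case: a => [[w|]|]; case: b => [[w'|]|] //=; by rewrite ?z2min // rleE => /and3P[].
Qed.

Lemma leQ_rank a b : qle a b -> b != htop -> r2 (g b) + rh (f a) <= rh (f b) + r2 (g a).
Proof.
case: a => [[w|]|]; case: b => [[w'|]|] //=; rewrite ?(rank_z2 z2min).
- by rewrite rleE /= => /and3P[_ _ H] _; flia.
- by have := reesP w'; rewrite /= => H _ _; flia.
- by [].
Qed.

Lemma leQ_rank_bot b : b != hbot -> b != htop -> r2 (g b) < rh (f b).
Proof. by case: b => [[w|]|] //= _ _; have := reesP w; rewrite /=; flia. Qed.

Lemma last_sec_top a s : path covQ a s -> last a s = htop -> s != [::] ->
  last None (pairmap sec a s) = None.
Proof.
elim: s a => [|v s IH] a //= /andP[c p] l _.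
case: s IH p l => [|v' s] IH p l /=; first by move: l => /= ->; rewrite sec_top.
by have := IH v p l isT.
Qed.


Theorem main_EL : EL_labeling hle1 <=%O lam1 -> semiEL_labeling le2 <=%O lam2 ->
  EL_labeling qle (@prod_lab_le _ _ L1 L2) lab.
Proof.
move=> EL1 EL2 a b ab.
have at' : a != htop by apply/eqP => E; move: ab; rewrite E; case: b => [[?|]|].
have leab : qle a b by case/andP: ab.
have [c1 [sc1 so1 un1 lx1]] := EL1 _ _ (ltrQ_f ab).
move: (sc1) => /andP[pc1 /eqP lc1].
set k := g a; set l := g b.
have [C [pC lC sC bC unC]] : exists C : seq P2,
  [/\ path cov2 k C, (b != htop -> last k C = l), sorted <=%O (labseq lam2 k C),
      (b == htop -> C = [::]) &
      (forall t, b != htop -> path cov2 k t -> last k t = l ->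
         (sorted <=%O (labseq lam2 k t) -> t = C) /\
         (t = C \/ lexlt <=%O (labseq lam2 k C) (labseq lam2 k t)))].
  have [T|nT] := boolP ((b == htop) || (k == l)).
    have T' : b != htop -> k = l by case/orP: T => [->//|/eqP].
    have Hnil : forall t, b != htop -> path cov2 k t -> last k t = l -> t = [::].
      move=> t bt pt lt; have := rank_path sp2 pt; rewrite lt -(T' bt).
      by case: t {pt lt} => //= ? ?; flia.
    exists [::]; split => //.
    move=> t bt pt lt; have := Hnil t bt pt lt; by split => //; left.
  move: nT; rewrite negb_or => /andP[bt kl].
  have kl' : (k < l)%O by rewrite lt_def eq_sym kl leQ_g.
  have [m [Hm lm]] := max_above l.
  have kl2 : ltr le2 k l by rewrite ltrE.
  have [c2 [sc2 so2 un2 lx2]] := EL2 m Hm k l kl2 lm.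
  move: (sc2) => /andP[pc2 /eqP lc2].
  exists c2; split => //.
  - by rewrite (negPf bt).
  - move=> t _ pt lt; split => [st|]; first by apply: un2 => //; rewrite /satchain pt lt eqxx.
    have [->|ne] := eqVneq t c2; first by left.
    by right; apply: lx2 => //; [rewrite /satchain pt lt eqxx | apply/eqP].
have snil : forall s, satchain qle a b s -> s != [::].
  by move=> [|? ?] // /andP[_ /eqP /= E]; move: ab; rewrite E /ltr eqxx.
have sizeS : forall s, satchain qle a b s -> b != htop -> size s = rh (f b) - rh (f a).
  move=> s /andP[ps /eqP ls] bt.
  have := rh_path (fpath ps); rewrite last_map ls size_map f_top => /(_ bt); flia.
have shape : forall s, satchain qle a b s -> sorted (@prod_lab_le _ _ L1 L2) (labseq lab a s) ->
   [/\ map f s = c1, comp a s = C &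
       pairmap sec a s = nseq (size c1 - size C) None ++ map Some (labseq lam2 k C)].
  move=> s cs so; have sne := snil s cs; move: cs => /andP[ps /eqP ls].
  move: so; rewrite (labseqE ps) sorted_zip ?size_pairmap ?size_map // => /andP[soa sob].
  have fs : map f s = c1.
    by apply: un1 => //; rewrite /satchain fpath //= last_map ls eqxx.
  have [j [gm Eb]] := sorted_optP sob.
  have Egm : gm = labseq lam2 k (comp a s) by rewrite -(comp_lab ps) Eb pmap_nsome.
  have sgm : sorted <=%O gm by move: sob; rewrite Eb => /cat_sorted2 [_]; rewrite sorted_map_some.
  have cC : comp a s = C.
    have [bt|bnt] := eqVneq b htop.
      have := last_sec_top ps (etrans ls bt) sne; rewrite Eb => Hl.
      have g0 : gm = [::].
        by case/lastP: gm {Eb Egm sgm} Hl => // g' v; rewrite map_rcons last_cat last_rcons.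
      rewrite bC ?bt //; have := congr1 size Egm; rewrite g0 /labseq size_pairmap.
      by case: (comp a s).
    have ls' : last a s != htop by rewrite ls.
    have /andP[pcp /eqP lcp] := comp_path ps ls'.
    have [H _] := unC (comp a s) bnt pcp (etrans lcp (congr1 g ls)).
    by apply: H; rewrite -Egm.
  split => //; rewrite Eb -cC -Egm.
  have := congr1 size Eb; rewrite size_pairmap size_cat size_nseq size_map -fs size_map.
  by move=> ->; congr (nseq _ _ ++ _); rewrite Egm /labseq size_pairmap addnK.
have uniqS : forall s s', satchain qle a b s -> sorted (@prod_lab_le _ _ L1 L2) (labseq lab a s) ->
    satchain qle a b s' -> sorted (@prod_lab_le _ _ L1 L2) (labseq lab a s') -> s = s'.
  move=> s s' cs ss cs' ss'.
  have [F1 C1 B1] := shape s cs ss; have [F2 C2 B2] := shape s' cs' ss'.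
  apply: (uniq_from (proj1 (andP cs)) (proj1 (andP cs'))).
  - by rewrite F1 F2.
  - by rewrite B1 B2.
  - by rewrite C1 C2.
have notop1 : b != htop -> htop \notin f a :: c1.
  by move=> bnt; apply: path_notop pc1 _; rewrite lc1 f_top.
have [s [cs ss]] : exists s, satchain qle a b s /\ sorted (@prod_lab_le _ _ L1 L2) (labseq lab a s).
  have [T|nT] := boolP ((b == htop) || (k == l)).
    have [s [ps fs ss ls]] := build_none at' pc1.
    exists s.
    have fl : f (last a s) = f b by rewrite -last_map fs lc1.
    have lsb : last a s = b.
      have [bt|bnt] := eqVneq b htop.
        by apply/eqP; rewrite bt -f_top fl bt.
      have lnt : last a s != htop by rewrite -f_top fl f_top.
      have gl : g (last a s) = g b.
        by rewrite (ls lnt); move: T; rewrite (negPf bnt) /= => /eqP.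
      by rewrite -(mkK (last a s)) fl gl mkK.
    split; first by rewrite /satchain ps lsb eqxx.
    rewrite (labseqE ps) sorted_zip ?size_pairmap ?size_map // fs so1 ss /=.
    by have := @sorted_nseq_some _ L2 (size c1) [::] isT; rewrite /= cats0.
  move: nT; rewrite negb_or => /andP[bt kl].
  have lC' := lC bt.
  have rhn : rh (f b) = rh (f a) + size c1 by rewrite -lc1 rh_path // lc1 f_top.
  have r2m : r2 l = r2 k + size C by rewrite -lC' rank_path.
  have mn : size C <= size c1 by have := leQ_rank leab bt; rewrite -/k -/l; flia.
  have m0 : 0 < size C.
    by move: lC'; case: (C) => //= E; move: kl; rewrite E eqxx.
  have jpos : a = hbot -> 0 < size c1 - size C.
    move=> E; have bnb : b != hbot by apply/eqP => E'; move: ab; rewrite E E' /ltr eqxx.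
    have := leQ_rank_bot bnb bt; move: rhn r2m; rewrite /k /l E /= (rank_z2 z2min); flia.
  set j := size c1 - size C.
  have := pc1; rewrite -(cat_take_drop j c1) cat_path => /andP[pt pd].
  have [s1 [ps1 fs1 ss1 ls1]] := build_none at' pt.
  have fu1 : f (last a s1) = last (f a) (take j c1) by rewrite -(last_map f s1 a) fs1.
  have u1nt : last a s1 != htop.
    apply/negP => /eqP E; have := notop1 bt; have := mem_last (f a) (take j c1).
    rewrite -fu1 E /= !inE => /orP[->//|/mem_take ->]; by rewrite orbT.
  have gu1 : g (last a s1) = k := ls1 u1nt.
  have u1nb : f (last a s1) != hbot.
    rewrite fu1; case: (posnP j) => [j0|jp].
      rewrite j0 take0 /=; apply/eqP => E; move: (jpos) j0.
      have -> : a = hbot by move: E; case: (a) => [[?|]|].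
      by rewrite /j => /(_ erefl); flia.
    have : last (f a) (take j c1) \in take j c1.
      have : size (take j c1) != 0 by rewrite size_takel ?leq_subr // -lt0n.
      by case: (take j c1) => //= x t _; rewrite mem_last.
    move/mem_take; apply: contraL => /eqP ->; exact: path_nobot pc1.
  have [w1 Ew1] : exists w1, last a s1 = hin w1.
    by move: u1nt u1nb; case: (last a s1) => [[w|]|] //; exists w.
  have fw1 : hin (val w1).1 = last (f a) (take j c1) by rewrite -fu1 Ew1.
  have gw1 : (val w1).2 = k by rewrite -gu1 Ew1.
  have [s2 [ps2 fs2 gs2 ss2]] := build_some (c := drop j c1) (d := C) (w := w1)
     ltac:(by rewrite fw1) ltac:(by rewrite gw1)
     ltac:(by rewrite size_drop /j; flia)
     ltac:(by apply: contra (notop1 bt) => /mem_drop Hd; rewrite inE Hd orbT).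
  exists (s1 ++ s2).
  have ps : path covQ a (s1 ++ s2) by rewrite cat_path ps1 Ew1 ps2.
  have lsb : last a (s1 ++ s2) = b.
    rewrite last_cat Ew1 -(mkK (last (hin w1) s2)) -(mkK b).
    rewrite -(last_map f s2 (hin w1)) -(last_map g s2 (hin w1)) fs2 gs2 /=.
    by rewrite fw1 -last_cat cat_take_drop lc1 gw1 lC'.
  split; first by rewrite /satchain ps lsb eqxx.
  rewrite (labseqE ps) sorted_zip ?size_pairmap ?size_map // map_cat fs1 fs2 cat_take_drop so1 /=.
  rewrite pairmap_cat ss1 Ew1 ss2 gw1.
  exact: sorted_nseq_some.
exists s; split => //.
  by move=> s' cs' ss'; apply: (uniqS s' s).
move=> s' cs' ne.
have [ps /eqP ls] := andP cs; have [ps' /eqP ls'] := andP cs'.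
have [fs cC eb] := shape s cs ss.
have ss0 := ss.
rewrite (labseqE ps) (labseqE ps') fs eb.
rewrite (labseqE ps) fs eb in ss0.
have sc1' : satchain hle1 (f a) (f b) (map f s') by rewrite /satchain fpath //= last_map ls' eqxx.
have Hlex := @lex_zip _ _ L1 L2 (labseq lam1 (f a) c1) (labseq lam1 (f a) (map f s'))
   (nseq (size c1 - size C) None ++ map Some (labseq lam2 k C)) (pairmap sec a s').
case: Hlex.
- by rewrite -eb /labseq !size_pairmap -fs size_map.
- by rewrite /labseq !size_pairmap size_map.
- have [E|ne'] := eqVneq (map f s') c1; first by left; rewrite E.
  by right; apply: lx1 => //; apply/eqP.
- exact: sorted_nseq_some.
- have [bt|bnt] := eqVneq b htop.
    by left; rewrite count_nsome bC ?bt.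
  right; split.
  + by rewrite -eb !size_pairmap (sizeS s cs bnt) (sizeS s' cs' bnt).
  + rewrite count_nsome comp_count /labseq size_pairmap.
    have ls1 : last a s' != htop by rewrite ls'.
    have /andP[pcp /eqP lcp] := comp_path ps' ls1.
    have := rank_path sp2 pcp; have := rank_path sp2 pC; rewrite lcp ls' (lC bnt) -/l -/k.
    by move=> E1 E2; apply/eqP; rewrite -(eqn_add2l (r2 k)) -E1 -E2.
  + rewrite pmap_nsome (comp_lab ps').
    have ls1 : last a s' != htop by rewrite ls'.
    have /andP[pcp /eqP lcp] := comp_path ps' ls1.
    have [_ [->|H]] := unC (comp a s') bnt pcp (etrans lcp (congr1 g ls')); first by left.
    by right.
- move=> E; exfalso; apply: ne; apply: (uniqS s' s) => //.
  by rewrite (labseqE ps') -E.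
- done.
Qed.

End Main.

Theorem theorem2p3 (d1 d2 e1 e2 : Order.disp_t)
  (P1 : finPOrderType d1) (P2 : finPOrderType d2)
  (L1 : porderType e1) (L2 : porderType e2)
  (z2 : P2) (lam1 : hat P1 -> hat P1 -> L1) (lam2 : P2 -> P2 -> L2) :
  semipure (<=%O : rel P1) ->
  semipure (<=%O : rel P2) ->
  height (<=%O : rel P1) = height (<=%O : rel P2) ->
  (forall q : P2, (z2 <= q)%O) ->
  EL_labeling (hat_le (<=%O : rel P1)) (<=%O : rel L1) lam1 ->
  semiEL_labeling (<=%O : rel P2) (<=%O : rel L2) lam2 ->
  EL_labeling (hat_le (@rees_le _ _ P1 P2)) (@prod_lab_le _ _ L1 L2)
    (rees_label z2 lam1 lam2).
Proof.
move=> sp1 sp2 hh z2min EL1 EL2.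
case: (pickP (@predT P1)) => [p0 _|H].
  exact: (main_EL (L1 := L1) (lam1 := lam1) (lam2 := lam2) sp1 sp2 z2min p0 EL1 EL2).
exfalso.
have h1 : height (<=%O : rel P1) = 0.
  apply/eqP; rewrite -leqn0; apply/bigmax_leqP => C _.
  by rewrite leqn0; apply/eqP; apply: eq_card0 => x; have := H x.
have h2 : 0 < height (<=%O : rel P2).
  have := set1_chainP z2; rewrite in_chainP => /andP[ch _].
  by apply: leq_trans (leq_bigmax_cond _ ch); rewrite cards1.
by move: h2; rewrite -hh h1.
Qed.
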